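(* Let $r\ge 2$ and $k\ge 3$ be integers and let $\widehat{F}_k$ be any $r$-coloring of the complete graph $K_k$. For every natural number $n$, there exists a complete multipartite graph on $n$ vertices which is $(r,\widehat{F}_k)$-extremal.
   Context: All graphs are finite and simple. An $r$-coloring of a graph is an arbitrary (not necessarily proper) assignment of colors from $\{1,\dots,r\}$ to its edges. The pattern of a colored graph is the partition of its edge set into (nonempty) color classes; names of colors are ignored. Given an $r$-coloring of a graph $G$, a copy of $\widehat{F}_k$ is a set of $k$ pairwise adjacent vertices of $G$ such that there is a bijection from these vertices to $V(K_k)$ under which two edges receive the same color in $G$ if and only if their images receive the same color in $\widehat{F}_k$ (i.e., the induced color pattern is isomorphic to that of $\widehat{F}_k$). A coloring of $G$ is $\widehat{F}_k$-free if it contains no copy of $\widehat{F}_k$. $c_{r,\widehat{F}_k}(G)$ denotes the number of $\widehat{F}_k$-free $r$-colorings of $E(G)$, and $c_{r,\widehat{F}_k}(n)$ is the maximum of $c_{r,\widehat{F}_k}(G)$ over all graphs $G$ on $n$ vertices. A graph $G$ on $n$ vertices is $(r,\widehat{F}_k)$-extremal if $c_{r,\widehat{F}_k}(G)=c_{r,\widehat{F}_k}(n)$. *)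

(* Defs.v *)
From mathcomp Require Import all_boot.
Set Implicit Arguments. Unset Strict Implicit. Unset Printing Implicit Defensive.

Definition simple_graph (n : nat) (G : {set {set 'I_n}}) : bool :=
  [forall e in G, #|e| == 2].

Definition complete_multipartite (n : nat) (G : {set {set 'I_n}}) : Prop :=
  exists p : 'I_n -> nat, forall e : {set 'I_n},
    (e \in G) = [exists u, exists v, (p u != p v) && (e == [set u; v])].

Definition edgeT (n : nat) (G : {set {set 'I_n}}) := {e : {set 'I_n} | e \in G}.

Definition ecol (n r : nat) (G : {set {set 'I_n}}) (c : {ffun edgeT G -> 'I_r})
  (e : {set 'I_n}) : option 'I_r := omap c (insub e : option (edgeT G)).

(* phi : 'I_k -> 'I_n embeds a copy of the colored clique F (F gives the color of
   each 2-subset {i,j} of 'I_k) : phi is injective, its image is pairwise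
   adjacent, and the induced color pattern is that of F. *)
Definition is_copy (n k r : nat) (G : {set {set 'I_n}}) (F : {set 'I_k} -> 'I_r)
  (c : {ffun edgeT G -> 'I_r}) (phi : 'I_k -> 'I_n) : bool :=
  injectiveb phi &&
  [forall i, forall j, (i != j) ==> ([set phi i; phi j] \in G)] &&
  [forall i, forall j, forall i', forall j',
     ((i != j) && (i' != j')) ==>
     ((ecol c [set phi i; phi j] == ecol c [set phi i'; phi j'])
        == (F [set i; j] == F [set i'; j']))].

Definition Ffree (n k r : nat) (G : {set {set 'I_n}}) (F : {set 'I_k} -> 'I_r)
  (c : {ffun edgeT G -> 'I_r}) : bool :=
  [forall phi : {ffun 'I_k -> 'I_n}, ~~ is_copy F c phi].

Definition count_free (n k r : nat) (G : {set {set 'I_n}}) (F : {set 'I_k} -> 'I_r)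
  : nat := #|[set c : {ffun edgeT G -> 'I_r} | Ffree F c]|.

Definition extremal (n k r : nat) (F : {set 'I_k} -> 'I_r) (G : {set {set 'I_n}})
  : Prop :=
  simple_graph G /\
  forall G' : {set {set 'I_n}}, simple_graph G' -> count_free G' F <= count_free G F.

(* Main.v *)
Require Import Defs.
From mathcomp Require Import all_boot.
From mathcomp Require Import zify.
Set Implicit Arguments. Unset Strict Implicit. Unset Printing Implicit Defensive.

Section Main.
Variables (n k r : nat) (F : {set 'I_k} -> 'I_r).

Definition TT := {ffun {set 'I_n} -> option 'I_r}.

Definition copyf (f : TT) (phi : {ffun 'I_k -> 'I_n}) : bool :=
  injectiveb phi &&
  [forall i, forall j, (i != j) ==> (f [set phi i; phi j] != None)] &&
  [forall i, forall j, forall i', forall j',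
     ((i != j) && (i' != j')) ==>
     ((f [set phi i; phi j] == f [set phi i'; phi j'])
        == (F [set i; j] == F [set i'; j']))].

Definition freef (f : TT) : bool := [forall phi, ~~ copyf f phi].
Definition supp (f : TT) : {set {set 'I_n}} := [set e | f e != None].
Definition DD (G : {set {set 'I_n}}) := [set f : TT | (supp f == G) && freef f].

Lemma copy_ext (f g : TT) (phi : {ffun 'I_k -> 'I_n}) :
  (forall i j, i != j -> g [set phi i; phi j] = f [set phi i; phi j]) ->
  copyf g phi = copyf f phi.
Proof.
move=> H; rewrite /copyf; congr (_ && _ && _).
  apply: eq_forallb => i; apply: eq_forallb => j.
  by case: (i =P j) => [//|/eqP nij] /=; rewrite H.
apply: eq_forallb => i; apply: eq_forallb => j.
apply: eq_forallb => i'; apply: eq_forallb => j'.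
case: (i =P j) => [//|/eqP nij] /=.
case: (i' =P j') => [//|/eqP nij'] /=.
by rewrite !H.
Qed.

Lemma copy_mono (f g : TT) (phi : {ffun 'I_k -> 'I_n}) :
  (forall e, g e != None -> g e = f e) -> copyf g phi -> copyf f phi.
Proof.
move=> H cg; rewrite -(@copy_ext f g) // => i j nij.
apply: H; move: cg => /andP [/andP [_ /forallP /(_ i) /forallP /(_ j)]] + _.
by rewrite nij.
Qed.

Definition KK (a b : 'I_n) (f : TT) : TT :=
  [ffun e : {set 'I_n} => if (a \in e) && (b \notin e) then None else f e].

Lemma split_free (u w : 'I_n) (f : TT) : u != w -> f [set u; w] = None ->
  freef f = freef (KK w u f) && freef (KK u w f).
Proof.
move=> nuw fuw.
have monoK a b : forall phi, copyf (KK a b f) phi -> copyf f phi.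
  move=> phi; apply: copy_mono => e; rewrite ffunE.
  by case: ifP => // _; rewrite eqxx.
apply/idP/idP.
  move=> /forallP fr; apply/andP; split; apply/forallP => phi;
  apply/negP => /monoK; by apply/negP.
move=> /andP [/forallP f1 /forallP f2]; apply/forallP => phi.
apply/negP => cp.
have pairs i j : i != j -> f [set phi i; phi j] != None.
  move: cp => /andP [/andP [_ /forallP /(_ i) /forallP /(_ j)]] + _ nij.
  by rewrite nij.
have inj : injective phi.
  by move: cp => /andP [/andP [/injectiveP ? _] _].
case: (boolP [exists i, phi i == w]) => [/existsP [i /eqP pi] | nw].
- case: (boolP [exists j, phi j == u]) => [/existsP [j /eqP pj] | nu].
    have nij : j != i by apply/eqP => eji; move: nuw; rewrite -pi -pj eji eqxx.
    by move: (pairs _ _ nij); rewrite pj pi fuw.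
  move: (f2 phi); rewrite (@copy_ext f) ?cp // => i' j' _.
  rewrite ffunE !inE; case: ifP => //.
  move=> /andP [/orP [] /eqP e _]; move: nu => /existsP []; [exists i'|exists j'];
  by rewrite e.
- move: (f1 phi); rewrite (@copy_ext f) ?cp // => i' j' _.
  rewrite ffunE !inE; case: ifP => //.
  move=> /andP [/orP [] /eqP e _]; move: nw => /existsP []; [exists i'|exists j'];
  by rewrite e.
Qed.

End Main.
Section Count.
Variables (n k r : nat) (F : {set 'I_k} -> 'I_r) (d : 'I_r).

Definition ecolf (G : {set {set 'I_n}}) (c : {ffun edgeT G -> 'I_r}) : TT n r :=
  [ffun e => ecol c e].

Lemma ecol_None (G : {set {set 'I_n}}) (c : {ffun edgeT G -> 'I_r}) e :
  (ecol c e != None) = (e \in G).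
Proof. by rewrite /ecol; case: insubP => [u -> _|/negbTE ->]. Qed.

Lemma ecol_val (G : {set {set 'I_n}}) (c : {ffun edgeT G -> 'I_r}) (e : edgeT G) :
  ecol c (val e) = Some (c e).
Proof. by rewrite /ecol valK. Qed.

Lemma is_copyE (G : {set {set 'I_n}}) (c : {ffun edgeT G -> 'I_r}) (phi : {ffun 'I_k -> 'I_n}) :
  is_copy F c phi = copyf F (ecolf c) phi.
Proof.
rewrite /is_copy /copyf; congr (_ && _ && _).
  apply: eq_forallb => i; apply: eq_forallb => j.
  by rewrite ffunE ecol_None.
do 4 (apply: eq_forallb => ?).
by rewrite !ffunE.
Qed.

Lemma count_D (G : {set {set 'I_n}}) : count_free G F = #|DD F G|.
Proof.
rewrite /count_free -(@card_imset _ _ (@ecolf G)); last first.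
  move=> c1 c2 /ffunP E; apply/ffunP => e; move: (E (val e)).
  by rewrite !ffunE !ecol_val => -[].
apply: eq_card => f; rewrite !inE.
apply/imsetP/idP.
  move=> [c]; rewrite inE => fr ->.
  apply/andP; split.
    by apply/eqP/setP => e; rewrite !inE ffunE ecol_None.
  apply/forallP => phi; rewrite -is_copyE.
  by move/forallP: fr => /(_ phi).
move=> /andP [/eqP sG fr].
have fs e : (f e != None) = (e \in G) by rewrite -sG inE.
have ec : ecolf [ffun e : edgeT G => odflt d (f (val e))] = f.
  apply/ffunP => e; rewrite !ffunE /ecol.
  case: insubP => [u uG <-|/negbTE eG]; last first.
    by move: (fs e); rewrite eG; case: (f e).
  by rewrite /= ffunE; move: (fs (val u)); rewrite (valP u); case: (f (val u)).
exists [ffun e : edgeT G => odflt d (f (val e))]; last by rewrite ec.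
rewrite inE; apply/forallP => phi; rewrite is_copyE ec.
by move/forallP: fr => /(_ phi).
Qed.
End Count.
Section Dec.
Variables (n k r : nat) (F : {set 'I_k} -> 'I_r).
Local Notation TT := (TT n r).

Definition Gm (w : 'I_n) (G : {set {set 'I_n}}) := [set e in G | w \notin e].
Definition AA (w : 'I_n) G := [set f : TT | (supp f == Gm w G) && freef F f].

Lemma pair_eq (e : {set 'I_n}) u w :
  #|e| = 2 -> u \in e -> w \in e -> u != w -> e = [set u; w].
Proof.
move=> e2 ue we nuw; apply/eqP; rewrite eq_sym eqEcard cards2 nuw e2 andbT.
by apply/subsetP => x; rewrite !inE => /orP [] /eqP ->.
Qed.

Lemma simpleP (G : {set {set 'I_n}}) e : simple_graph G -> e \in G -> #|e| = 2.
Proof. by move=> /forallP /(_ e) sG eG; apply/eqP; rewrite eG in sG. Qed.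

Lemma noboth (G : {set {set 'I_n}}) u w e : simple_graph G -> u != w ->
  [set u; w] \notin G -> e \in G -> u \in e -> w \in e -> False.
Proof.
move=> sG nuw nG eG ue we; move: nG; rewrite -(pair_eq (simpleP sG eG)) //.
by rewrite eG.
Qed.

Lemma Dec (G : {set {set 'I_n}}) u w : simple_graph G -> u != w ->
  [set u; w] \notin G ->
  #|DD F G| = #|[set p : TT * TT | (p.1 \in AA w G) && (p.2 \in AA u G)
                  && (KK u w p.1 == KK w u p.2)]|.
Proof.
move=> sG nuw nG.
have nb := noboth sG nuw nG.
rewrite -(@card_imset _ _ (fun f : TT => (KK w u f, KK u w f))); last first.
  move=> f1 f2 [E1 E2]; apply/ffunP => e.
  move/ffunP: E1 => /(_ e); move/ffunP: E2 => /(_ e); rewrite !ffunE.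
  by case: (w \in e); case: (u \in e).
apply: eq_card => -[a b]; rewrite !inE /=.
apply/imsetP/idP.
  move=> [f]; rewrite inE => /andP [/eqP sf fr] [-> ->].
  have fs e : (f e != None) = (e \in G) by rewrite -sf inE.
  have fuw : f [set u; w] = None.
    by apply/eqP; rewrite -[_ == _]negbK fs (negbTE nG).
  move: fr; rewrite (split_free F nuw fuw) => /andP [fr1 fr2].
  rewrite fr1 fr2 !andbT; apply/andP; split; first (apply/andP; split).
  - apply/eqP/setP => e; rewrite !inE ffunE.
    case: (boolP (w \in e)) => we; case: (boolP (u \in e)) => ue //=; rewrite ?fs ?andbT ?andbF //.
    by apply/negbTE/negP => eG; apply: (nb e).
  - apply/eqP/setP => e; rewrite !inE ffunE.
    case: (boolP (w \in e)) => we; case: (boolP (u \in e)) => ue //=; rewrite ?fs ?andbT ?andbF //.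
    by apply/negbTE/negP => eG; apply: (nb e).
  - by apply/eqP/ffunP => e; rewrite !ffunE; case: (w \in e); case: (u \in e).
move=> /andP [/andP [/andP [/eqP sa fra] /andP [/eqP sb frb]] /eqP Kab].
have as_ e : (a e != None) = (e \in G) && (w \notin e) by move/setP: sa => /(_ e); rewrite !inE.
have bs e : (b e != None) = (e \in G) && (u \notin e) by move/setP: sb => /(_ e); rewrite !inE.
have aN (e : {set 'I_n}) : w \in e -> a e = None.
  by move=> we; apply/eqP; rewrite -[_ == _]negbK as_ we andbF.
have bN (e : {set 'I_n}) : u \in e -> b e = None.
  by move=> ue; apply/eqP; rewrite -[_ == _]negbK bs ue andbF.
pose f : TT := [ffun e : {set 'I_n} => if (w \in e) && (u \notin e) then b e else a e].
have E1 : KK w u f = a.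
  apply/ffunP => e; rewrite !ffunE.
  case: (boolP ((w \in e) && (u \notin e))) => [/andP [we _]| _] //=.
  by rewrite aN.
have E2 : KK u w f = b.
  apply/ffunP => e; rewrite !ffunE.
  case ue: (u \in e); case we: (w \in e) => /=.
  - by rewrite aN // bN.
  - by rewrite bN.
  - by [].
  - by move/ffunP: Kab => /(_ e); rewrite !ffunE ue we.
exists f; last by rewrite E1 E2.
have fuw : f [set u; w] = None.
  have wi : w \in [set u; w] by rewrite !inE eqxx orbT.
  have ui : u \in [set u; w] by rewrite !inE eqxx.
  by rewrite ffunE wi ui /= aN.
rewrite inE (split_free F nuw fuw) E1 E2 fra frb !andbT.
apply/eqP/setP => e; rewrite !inE ffunE.
case: (boolP (w \in e)) => we; case: (boolP (u \in e)) => ue /=.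
- by rewrite as_ we andbF; apply/esym/negP => eG; apply: (nb e).
- by rewrite bs ue andbT.
- by rewrite as_ we andbT.
- by rewrite as_ we andbT.
Qed.

End Dec.
Section Swap.
Variables (n k r : nat) (F : {set 'I_k} -> 'I_r).
Local Notation TT := (TT n r).
Variables (u w : 'I_n).

Definition sw (x : 'I_n) := if x == u then w else if x == w then u else x.

Lemma sw_inv x : sw (sw x) = x.
Proof.
rewrite /sw; case: (x =P u) => [->|nxu]; first by rewrite eqxx; case: (w =P u).
case: (x =P w) => [->|nxw]; first by rewrite eqxx.
by rewrite (introF eqP nxu) (introF eqP nxw).
Qed.

Lemma sw_inj : injective sw.
Proof. exact: can_inj sw_inv. Qed.

Lemma memsw x (S : {set 'I_n}) : (x \in sw @: S) = (sw x \in S).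
Proof. by rewrite -{1}(sw_inv x) mem_imset //; exact: sw_inj. Qed.

Lemma swswK (S : {set 'I_n}) : sw @: (sw @: S) = S.
Proof. by apply/setP => x; rewrite !memsw sw_inv. Qed.

Lemma sw_pair a b : sw @: [set a; b] = [set sw a; sw b].
Proof. by rewrite imsetU1 imset_set1. Qed.

Lemma sw_fix (S : {set 'I_n}) : (u \in S) = (w \in S) -> sw @: S = S.
Proof.
move=> E; apply/setP => x; rewrite memsw /sw.
case: (x =P u) => [->|_]; first by rewrite E.
by case: (x =P w) => [->|_]; first by rewrite E.
Qed.

Lemma sw_u : sw u = w. Proof. by rewrite /sw eqxx. Qed.
Lemma sw_w : sw w = u. Proof. by rewrite /sw eqxx; case: (w =P u). Qed.
Lemma sw_other x : x != u -> x != w -> sw x = x.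
Proof. by rewrite /sw => /negbTE -> /negbTE ->. Qed.

Definition sig (f : TT) : TT := [ffun e : {set 'I_n} => f (sw @: e)].

Lemma sigK (f : TT) : sig (sig f) = f.
Proof. by apply/ffunP => e; rewrite !ffunE swswK. Qed.

Lemma copy_sig (f : TT) phi :
  copyf F (sig f) phi = copyf F f [ffun i => sw (phi i)].
Proof.
rewrite /copyf; congr (_ && _ && _).
- apply/injectiveP/injectiveP => inj i j.
    by rewrite !ffunE => /sw_inj; apply: inj.
  by move=> E; apply: inj; rewrite !ffunE E.
- apply: eq_forallb => i; apply: eq_forallb => j.
  by rewrite !ffunE sw_pair.
- do 4 (apply: eq_forallb => ?).
  by rewrite !ffunE !sw_pair.
Qed.

Lemma free_sig (f : TT) : freef F (sig f) = freef F f.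
Proof.
apply/forallP/forallP => fr phi.
  have := fr [ffun i => sw (phi i)]; rewrite copy_sig.
  congr (~~ copyf _ _ _); apply/ffunP => i; by rewrite !ffunE sw_inv.
by rewrite copy_sig.
Qed.

End Swap.
Section Clone.
Variables (n k r : nat) (F : {set 'I_k} -> 'I_r).
Local Notation TT := (TT n r).

Definition NN (G : {set {set 'I_n}}) (v : 'I_n) := [set t | [set v; t] \in G].
Definition clone (G : {set {set 'I_n}}) (u w : 'I_n) :=
  Gm w G :|: [set [set w; t] | t in NN G u].

Lemma pair_of (e : {set 'I_n}) u : #|e| = 2 -> u \in e ->
  exists t, t != u /\ e = [set u; t].
Proof.
move=> /eqP /cards2P [x [y [nxy ->]]]; rewrite !inE => /orP [] /eqP ->.
  by exists y; split; rewrite // eq_sym.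
by exists x; split; rewrite // setUC.
Qed.

Variables (G : {set {set 'I_n}}) (u w : 'I_n).
Hypotheses (sG : simple_graph G) (nuw : u != w) (nG : [set u; w] \notin G).

Lemma NN_u t : t \in NN G u -> t != u /\ t != w.
Proof.
rewrite inE => tG; split; apply/eqP => E; move: tG; rewrite E.
  by move=> /(simpleP sG); rewrite setUid cards1.
by rewrite (negbTE nG).
Qed.

Lemma clone_simple : simple_graph (clone G u w).
Proof.
apply/forallP => e; apply/implyP; rewrite !inE => /orP [/andP [eG _]|].
  by apply/eqP; apply: (simpleP sG).
move=> /imsetP [t /NN_u [tu tw] ->]; by rewrite cards2 (eq_sym w t) tw.
Qed.

Lemma clone_nG : [set u; w] \notin clone G u w.
Proof.
apply/negP; rewrite inE => /orP [].
  by rewrite inE !inE eqxx orbT andbF.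
move=> /imsetP [t tN E].
have : u \in [set w; t] by rewrite -E !inE eqxx.
rewrite !inE (negbTE nuw) /= => /eqP ut.
by case: (NN_u tN); rewrite ut eqxx.
Qed.

Lemma Gm_clone : Gm w (clone G u w) = Gm w G.
Proof.
apply/setP => e; rewrite !inE; case: (boolP (w \in e)) => we; rewrite ?andbF //.
rewrite !andbT; apply/orP/idP => [[//|/imsetP [t _ E]]|->]; last by left.
by move: we; rewrite E !inE eqxx.
Qed.

Lemma memT2 (e : {set 'I_n}) : (sw u w @: e \in Gm u (clone G u w)) = (e \in Gm w G).
Proof.
rewrite !inE !memsw sw_u sw_w.
case: (boolP (w \in e)) => we; rewrite ?andbF ?andbT //.
case: (boolP (u \in e)) => ue /=; rewrite ?andbF ?andbT /=.
  apply/imsetP/idP.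
    move=> [t tN E]; have [tu tw] := NN_u tN.
    have -> : e = [set u; t].
      by rewrite -(swswK u w e) E sw_pair sw_w sw_other.
    by move: tN; rewrite inE.
  move=> eG; have [t [tu Et]] := pair_of (simpleP sG eG) ue.
  have tw : t != w by apply/eqP => tw; move: we; rewrite Et tw !inE eqxx orbT.
  exists t; first by rewrite inE -Et.
  by rewrite Et sw_pair sw_u sw_other.
rewrite sw_fix ?(negbTE ue) ?(negbTE we) //.
apply/orP/idP => [[//|/imsetP [t _ E]]|->]; last by left.
by move: we; rewrite E !inE eqxx.
Qed.

Lemma AA_sig (b : TT) : (sig u w b \in AA F w G) = (b \in AA F u (clone G u w)).
Proof.
rewrite !inE free_sig; congr (_ && _).
apply/eqP/eqP => E; apply/setP => e.
  by rewrite -(swswK u w e) memT2 -E !inE !ffunE swswK.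
by rewrite -memT2 -E !inE !ffunE.
Qed.

Lemma KK_sig (a : TT) : a \in AA F w G -> KK w u (sig u w a) = KK u w a.
Proof.
rewrite inE => /andP [/eqP sa _].
have aN (e : {set 'I_n}) : w \in e -> a e = None.
  move=> we; apply/eqP; rewrite -[_ == _]negbK.
  by move/setP: sa => /(_ e); rewrite !inE => ->; rewrite we andbF.
apply/ffunP => e; rewrite !ffunE.
case ue: (u \in e); case we: (w \in e) => /=.
- by rewrite sw_fix ?ue ?we.
- by rewrite aN // memsw sw_w ue.
- by rewrite aN.
- by rewrite sw_fix ?ue ?we.
Qed.

Lemma AA_clone : AA F w (clone G u w) = AA F w G.
Proof. by rewrite /AA Gm_clone. Qed.

Lemma L_clone :
  #|DD F (clone G u w)| =
  #|[set p : TT * TT | (p.1 \in AA F w G) && (p.2 \in AA F w G)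
                  && (KK u w p.1 == KK u w p.2)]|.
Proof.
rewrite (Dec F clone_simple nuw clone_nG) AA_clone.
apply/esym; rewrite -(@card_imset _ _ (fun p : TT * TT => (p.1, sig u w p.2))); last first.
  by move=> [a1 b1] [a2 b2] /= [-> E]; rewrite -(sigK u w b1) E sigK.
apply: eq_card => -[a b]; rewrite [in RHS]inE /=.
apply/imsetP/idP.
  move=> [[a1 a2]]; rewrite inE /= => /andP [/andP [aA bA] /eqP Kab] [-> ->].
  by rewrite -AA_sig sigK aA bA /= KK_sig // Kab.
move=> /andP [/andP [aA bA] /eqP Kab].
exists (a, sig u w b); last by rewrite /= sigK.
rewrite inE /= aA AA_sig bA /= Kab -(KK_sig (a := sig u w b)) ?sigK //.
by rewrite AA_sig.
Qed.

End Clone.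
Section Ineq.
Variables (T0 Z : finType) (A B : {set T0}) (k1 k2 : T0 -> Z).

Definition SS (A B : {set T0}) (k1 k2 : T0 -> Z) :=
  [set p : T0 * T0 | (p.1 \in A) && (p.2 \in B) && (k1 p.1 == k2 p.2)].

Lemma cardSS (A' B' : {set T0}) (k1' k2' : T0 -> Z) :
  #|SS A' B' k1' k2'| = \sum_(z : Z) #|[set a in A' | k1' a == z]| * #|[set b in B' | k2' b == z]|.
Proof.
rewrite -sum1dep_card (partition_big (fun p : T0 * T0 => k1' p.1) predT) //.
apply: eq_bigr => z _; rewrite sum1dep_card -cardsX; apply: eq_card => -[a b].
rewrite !inE /=; case E: (k1' a == z); rewrite ?andbF ?andbT //.
by move/eqP: E => ->; rewrite eq_sym; case: (a \in A'); case: (b \in B').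
Qed.

Lemma Ineq : 2 * #|SS A B k1 k2| <= #|SS A A k1 k1| + #|SS B B k2 k2|.
Proof.
rewrite !cardSS big_distrr -big_split /=; apply: leq_sum => z _.
set x := #|_|; set y := #|_|.
case: (leqP x y) => h.
  have -> : y = x + (y - x) by lia.
  set d := y - x; nia.
have -> : x = y + (x - y) by lia.
set d := x - y; nia.
Qed.
End Ineq.
Section Twins.
Variables (n : nat) (G : {set {set 'I_n}}) (x y : 'I_n).
Hypotheses (sG : simple_graph G) (nxy : x != y) (nG : [set x; y] \notin G)
  (nN : NN G x != NN G y).

Local Notation H := (clone G x y).
Definition CC (G0 : {set {set 'I_n}}) (v : 'I_n) := [set b | NN G0 b == NN G0 v].
Definition TW (G0 : {set {set 'I_n}}) := \sum_(a : 'I_n) #|CC G0 a|.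

Lemma NN_sym (G0 : {set {set 'I_n}}) a b : (a \in NN G0 b) = (b \in NN G0 a).
Proof. by rewrite !inE setUC. Qed.

Lemma NNH_y : NN H y = NN G x.
Proof.
apply/setP => t; rewrite [in LHS]inE /clone !inE eqxx /= andbF /=.
apply/imsetP/idP => [[t' tN E]|tN]; last by exists t; rewrite // inE.
have [t'x t'y] := NN_u sG nG tN.
have : t \in [set y; t] by rewrite !inE eqxx orbT.
rewrite E !inE => /orP [/eqP ty|/eqP ->]; last by move: tN; rewrite inE.
have : t' \in [set y; t] by rewrite E !inE eqxx orbT.
by rewrite ty setUid inE (negbTE t'y).
Qed.

Lemma NNH_a a t : a != y ->
  (t \in NN H a) = if t == y then a \in NN G x else t \in NN G a.
Proof.
move=> ay; rewrite [in LHS]inE /clone !inE.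
case: (t =P y) => [->|/eqP ty].
  rewrite eqxx orbT andbF /=; apply/imsetP/idP => [[t' tN E]|aN].
    have : a \in [set y; t'] by rewrite -E !inE eqxx.
    by rewrite !inE (negbTE ay) /= => /eqP ->; move: tN; rewrite inE.
  by exists a; rewrite ?inE // setUC.
rewrite (eq_sym y a) (eq_sym y t) (negbTE ay) (negbTE ty) /= andbT.
apply/orP/idP => [[//|/imsetP [t' _ E]]|->]; last by left.
have : y \in [set a; t] by rewrite E !inE eqxx.
by rewrite !inE (eq_sym y a) (eq_sym y t) (negbTE ay) (negbTE ty).
Qed.

Lemma NNx_x : x \notin NN G x.
Proof. by rewrite inE setUid; apply/negP => /(simpleP sG); rewrite cards1. Qed.

Lemma NNx_y : y \notin NN G x.
Proof. by rewrite inE. Qed.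

Lemma twin_pres a b : a != y -> b != y -> NN G a = NN G b -> NN H a = NN H b.
Proof.
move=> ay bY E; apply/setP => t; rewrite !NNH_a //.
by case: (t == y); [rewrite (NN_sym G a x) E -(NN_sym G b x) | rewrite E].
Qed.

Lemma CCx_y : y \notin CC G x.
Proof. by rewrite inE eq_sym. Qed.

Lemma NNH_Cx a : a \in y |: CC G x -> NN H a = NN G x.
Proof.
rewrite !inE => /orP [/eqP ->|/eqP E]; first exact: NNH_y.
have ay : a != y by apply/eqP => ay; move: CCx_y; rewrite -ay inE E eqxx.
apply/setP => t; rewrite NNH_a //.
case: (t =P y) => [->|_]; last by rewrite E.
by rewrite (NN_sym G a x) E (negbTE NNx_x) (negbTE NNx_y).
Qed.

Lemma sum_mem (A : {set 'I_n}) : \sum_(a : 'I_n) (a \in A : nat) = #|A|.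
Proof. by rewrite -sum1_card [RHS]big_mkcond; apply: eq_bigr => a _; case: (a \in A). Qed.

Lemma TW_incr : #|CC G y| <= #|CC G x| -> TW G < TW H.
Proof.
move=> le.
pose g a := #|CC G a :\ y|.
have TWG : TW G = \sum_(a : 'I_n) g a + #|CC G y|.
  rewrite /TW -(sum_mem (CC G y)) -big_split /=; apply: eq_bigr => a _.
  by rewrite (cardsD1 y) addnC /g !inE eq_sym.
have gy : g y + 1 = #|CC G y| by rewrite (cardsD1 y) /g !inE eqxx addnC.
have Cxs : #|y |: CC G x| = #|CC G x| + 1 by rewrite cardsU1 CCx_y addnC.
have bigC a : a \in y |: CC G x -> #|CC G x| + 1 <= #|CC H a|.
  move=> aC; rewrite -Cxs; apply: subset_leq_card; apply/subsetP => b bC.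
  by rewrite inE (NNH_Cx aC) (NNH_Cx bC).
have per a : a != y -> g a + (a \in CC G x) <= #|CC H a|.
  move=> ay; case: (boolP (a \in CC G x)) => aC /=.
    have : g a <= #|CC G x|.
      rewrite /g; apply: leq_trans (subset_leq_card (subsetDl _ _)) _.
      by move: aC; rewrite inE => /eqP E; apply/eq_leq/eq_card => b; rewrite !inE E.
    by move=> hg; apply: leq_trans (bigC a (setU1r _ aC)); rewrite leq_add2r.
  rewrite addn0; apply: subset_leq_card; apply/subsetP => b.
  rewrite !inE => /andP [bY /eqP E]; apply/eqP; exact: twin_pres.
have SH : \sum_(a | a != y) (g a + (a \in CC G x)) <= \sum_(a | a != y) #|CC H a|.
  by apply: leq_sum => a; apply: per.
have sumx : \sum_(a | a != y) (a \in CC G x : nat) = #|CC G x|.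
  by rewrite -(sum_mem (CC G x)) [in RHS](bigD1 y) //= (negbTE CCx_y).
move: SH; rewrite big_split /= sumx => SH.
have Hy : #|CC G x| + 1 <= #|CC H y| by apply: bigC; rewrite !inE eqxx.
rewrite TWG /TW (bigD1 y) //= [X in _ < X](bigD1 y) //=.
move: SH Hy gy le; set A := \sum_(_ | _) g _; set B := \sum_(_ | _) #|CC H _|.
clearbody g A B; set c1 := #|CC G x|; set c2 := #|CC G y|; set c3 := #|CC H y|.
set c4 := g y; lia.
Qed.

End Twins.
Section Final.
Variables (n k r : nat) (F : {set 'I_k} -> 'I_r) (d : 'I_r).

Definition extb (G : {set {set 'I_n}}) := simple_graph G &&
  [forall G' : {set {set 'I_n}}, simple_graph G' ==> (count_free G' F <= count_free G F)].

Lemma clone_count G u w : extb G -> u != w -> [set u; w] \notin G ->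
  count_free (clone G u w) F = count_free G F.
Proof.
move=> /andP [sG /forallP mx] nuw nG.
have nwu : w != u by rewrite eq_sym.
have nG' : [set w; u] \notin G by rewrite setUC.
have h1 := L_clone F sG nuw nG.
have h2 := L_clone F sG nwu nG'.
have h0 := Dec F sG nuw nG.
have hI := Ineq (AA F w G) (AA F u G) (KK u w) (KK w u).
move/implyP: (mx (clone G u w)) => /(_ (clone_simple sG nG)) m1.
move/implyP: (mx (clone G w u)) => /(_ (clone_simple sG nG')) m2.
rewrite !(count_D F d) in m1 m2 *.
rewrite /SS in hI.
rewrite h1; rewrite h1 in m1; rewrite h2 in m2; rewrite h0 in m1 m2 *.
move: hI m1 m2.
set X := #|_|; set Y := #|_|; set Z := #|_|.
lia.
Qed.

Lemma ext_clone G u w : extb G -> u != w -> [set u; w] \notin G ->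
  extb (clone G u w).
Proof.
move=> eG nuw nG; rewrite /extb (clone_count eG nuw nG).
move: eG => /andP [sG mx]; by rewrite (clone_simple sG nG).
Qed.

Lemma key G u w : extb G -> (forall H, extb H -> TW H <= TW G) ->
  u != w -> [set u; w] \notin G -> NN G u = NN G w.
Proof.
move=> eG mx nuw nG; case: (NN G u =P NN G w) => // /eqP nN; exfalso.
have sG : simple_graph G by case/andP: eG.
case: (leqP #|CC G w| #|CC G u|) => h.
  have := TW_incr sG nuw nG nN h.
  by rewrite ltnNge mx // ext_clone.
have nwu : w != u by rewrite eq_sym.
have nG' : [set w; u] \notin G by rewrite setUC.
have nN' : NN G w != NN G u by rewrite eq_sym.
have := TW_incr sG nwu nG' nN' (ltnW h).
by rewrite ltnNge mx // ext_clone.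
Qed.

End Final.

Lemma exists_max (T : finType) (P : pred T) (f : T -> nat) x0 :
  P x0 -> exists2 x, P x & forall y, P y -> f y <= f x.
Proof. by move=> Px0; case: (arg_maxnP f Px0) => x Px mx; exists x. Qed.

Theorem theorem1p1 (r k : nat) (F : {set 'I_k} -> 'I_r) (n : nat) :
  2 <= r -> 3 <= k ->
  exists G : {set {set 'I_n}}, complete_multipartite G /\ extremal F G.
Proof.
move=> hr _.
have d : 'I_r by exists 0; lia.
have s0 : simple_graph (set0 : {set {set 'I_n}}).
  by apply/forallP => e; rewrite inE.
have [G0 sG0 mx0] := exists_max (fun G => count_free G F) s0.
have e0 : extb F G0.
  rewrite /extb sG0 /=.
  by apply/forallP => G'; apply/implyP => sG'; apply: mx0.
have [G eG mxT] := exists_max (@TW n) e0.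
have sG : simple_graph G by case/andP: eG.
exists G; split; last first.
  split => // G' sG'; move: eG => /andP [_ /forallP /(_ G') /implyP]; exact.
exists (fun x => val (enum_rank (NN G x))) => e.
have pE u v : (val (enum_rank (NN G u)) != val (enum_rank (NN G v))) = (NN G u != NN G v).
  by rewrite (inj_eq val_inj) (inj_eq enum_rank_inj).
apply/idP/existsP.
  move=> eGe; have := simpleP sG eGe => /eqP /cards2P [x [y [nxy Exy]]].
  exists x; apply/existsP; exists y; rewrite pE Exy eqxx andbT.
  apply/eqP => E.
  have : y \in NN G y by rewrite -E inE -Exy.
  by rewrite inE setUid => /(simpleP sG); rewrite cards1.
move=> [u /existsP [v /andP [nN /eqP ->]]].
rewrite pE in nN.
have nuv : u != v by apply: contraNneq nN => ->.
apply/negPn/negP => nG.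
by move: nN; rewrite (key d eG mxT nuv nG) eqxx.
Qed.
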